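(* Let $G$ be a graph whose vertex set $V(G)$ is partitioned into an independent set $S$ and a clique $K$ (so $G$ is a split graph). Suppose that for any three distinct vertices $u,v,w\in S$ there exist two distinct vertices $x,y\in\{u,v,w\}$ with $N_G(x)\supseteq N_G(y)$. Then $G$ is an interval graph.
   Context: All graphs are finite, simple and undirected. $N_G(v)$ denotes the set of neighbors of $v$ in $G$. An interval graph is the intersection graph of a finite family of closed intervals on the real line. *)

(* Defs.v *)
From Stdlib Require Import Reals.
From mathcomp Require Import all_boot.
Set Implicit Arguments. Unset Strict Implicit. Unset Printing Implicit Defensive.

Definition simple_graph (T : finType) (e : rel T) : Prop :=
  symmetric e /\ irreflexive e.

Definition nbhd (T : finType) (e : rel T) (v : T) : {set T} := [set w | e v w].

Definition interval_graph (T : finType) (e : rel T) : Prop :=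
  exists (l r : T -> R),
    (forall v, Rle (l v) (r v)) /\
    (forall u v, u != v ->
       (e u v <-> exists x : R,
          (Rle (l u) x /\ Rle x (r u)) /\ (Rle (l v) x /\ Rle x (r v)))).

(* Main.v *)
Require Import Defs.
From Stdlib Require Import Reals Lra.
From mathcomp Require Import all_boot.
From mathcomp Require Import zify.
Set Implicit Arguments. Unset Strict Implicit.

Definition cmp (T : finType) (le : rel T) x y := le x y || le y x.

Lemma cmpC (T : finType) (le : rel T) a b : cmp le a b = cmp le b a.
Proof. by rewrite /cmp orbC. Qed.

Lemma extend_col (T : finType) (le : rel T) (S : {set T}) (x : T) (c' : T -> bool) :
  x \in S ->
  (forall y, le y y) ->
  (forall x y z, x \in S -> y \in S -> z \in S -> [|| cmp le x y, cmp le y z | cmp le x z]) ->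
  (forall y z, y \in S :\ x -> z \in S :\ x -> c' y = c' z -> cmp le y z) ->
  (forall a y, a \in S :\ x -> c' a -> cmp le x a -> y \in S :\ x -> ~~ cmp le x y -> le a y) ->
  exists c : T -> bool, forall y z, y \in S -> z \in S -> c y = c z -> cmp le y z.
Proof.
move=> xS lr hA hc H.
exists (fun y => if y == x then false else if cmp le x y then c' y else true).
move=> y z yS zS.
case: (eqVneq y x) => [->|ynx]; case: (eqVneq z x) => [->|znx] //=.
- by rewrite /cmp lr.
- by case: ifP => // h _.
- by case: ifP => // h _; rewrite cmpC.
have y' : y \in S :\ x by rewrite !inE ynx.
have z' : z \in S :\ x by rewrite !inE znx.
case: ifP => hy; case: ifP => hz.
- exact: hc.
- by move=> e; rewrite /cmp (H y z) ?hz ?e.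
- move=> e; rewrite /cmp (H z y) ?hy ?orbT //; by rewrite -e.

- move=> _; move: (hA x y z xS yS zS); rewrite hy hz /= orbF; done.
Qed.

Lemma chain2 (T : finType) (le : rel T) (w : T -> nat)
 (lr : forall x, le x x) (lt : forall x y z, le x y -> le y z -> le x z)
 (lew : forall x y, le x y -> w x <= w y)
 (lewe : forall x y, le x y -> w y <= w x -> le y x) :
 forall n (S : {set T}), #|S| <= n ->
 (forall x y z, x \in S -> y \in S -> z \in S -> [|| cmp le x y, cmp le y z | cmp le x z]) ->
 exists c : T -> bool, forall x y, x \in S -> y \in S -> c x = c y -> cmp le x y.
Proof.
elim=> [|n IH] S hS hA.
  move: hS; rewrite leqn0 => /eqP/cards0_eq ->.
  by exists (fun _ => true) => x y; rewrite inE.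
case: (set_0Vmem S) => [-> | [x0 x0S]].
  by exists (fun _ => true) => x y; rewrite inE.
case: (arg_maxnP w x0S) => x xS0 xmax0.
have xS : x \in S := xS0.
have xmax : forall j, j \in S -> w j <= w x := xmax0.
have hS' : #|S :\ x| <= n by move: hS; rewrite (cardsD1 x S) xS.
have [c' hc'] : exists c' : T -> bool, forall y z, y \in S :\ x -> z \in S :\ x -> c' y = c' z -> cmp le y z.
  apply: IH => // a b d; rewrite !inE => /andP[_ aS] /andP[_ bS] /andP[_ dS]; exact: hA.
have mx : forall y, y \in S -> cmp le x y -> le y x.
  move=> y yS /orP[h|h] //; apply: lewe => //; exact: xmax.
case: (boolP [exists y in S :\ x, ~~ cmp le x y]) => [/exists_inP[y0 y0S y0n] | hno].
  pose P := [pred y | (y \in S :\ x) && ~~ cmp le x y].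
  have Py0 : P y0 by rewrite /P /= y0S y0n.
  case: (arg_minnP w Py0) => m /andP[mS mn] mmin0.
  have mmin : forall j, P j -> w m <= w j := mmin0.
  have Imin : forall y, y \in S :\ x -> ~~ cmp le x y -> le m y.
    move=> y yS yn.
    have xS' := xS.
    move: mS yS; rewrite !inE => /andP[_ mS] /andP[_ yS].
    move: (hA x m y xS mS yS); rewrite (negbTE mn) (negbTE yn) /= orbF => /orP[h|h] //.
    apply: lewe => //; apply: mmin; rewrite /P /= yn andbT !inE yS andbT.
    by apply/negP => /eqP ey; rewrite ey /cmp lr in yn.
  have key : forall c'' : T -> bool, (forall y z, y \in S :\ x -> z \in S :\ x -> c'' y = c'' z -> cmp le y z) -> c'' m ->
     exists c : T -> bool, forall y z, y \in S -> z \in S -> c y = c z -> cmp le y z.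
    move=> c'' hc'' cm.
    apply: (extend_col xS lr hA hc'') => a y aS ca xa yS yn.
    have am : cmp le a m by apply: hc'' => //; rewrite ca cm.
    have ax : le a x by apply: mx => //; move: aS; rewrite !inE => /andP[].
    case/orP: am => [am|ma]; first exact: lt am (Imin y yS yn).
    by exfalso; move: mn; rewrite /cmp (lt _ _ _ ma ax) orbT.
  case cmv: (c' m); first exact: (key c').
  apply: (key (fun y => ~~ c' y)); last by rewrite cmv.
  by move=> y z yS zS /negb_inj; apply: hc'.
apply: (extend_col xS lr hA hc') => a y _ _ _ yS yn.
by exfalso; move/exists_inP: hno; apply; exists y.
Qed.

Theorem lemma2p3 (T : finType) (e : rel T) (S K : {set T}) :
  simple_graph e ->
  S :&: K = set0 ->
  S :|: K = [set: T] ->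
  (forall u v, u \in S -> v \in S -> ~~ e u v) ->
  (forall u v, u \in K -> v \in K -> u != v -> e u v) ->
  (forall u v w, u \in S -> v \in S -> w \in S ->
     u != v -> v != w -> u != w ->
     exists x y, x \in [:: u; v; w] /\ y \in [:: u; v; w] /\ x != y /\
                 nbhd e y \subset nbhd e x) ->
  interval_graph e.
Proof.
move=> [esym eirr] hSK hSuK hSind hKcl h3.
pose le := [rel x y : T | nbhd e x \subset nbhd e y].
pose w := fun x => #|nbhd e x|.
have lr : forall x, le x x by move=> x; exact: subxx.
have lt : forall x y z, le x y -> le y z -> le x z by move=> x y z; exact: subset_trans.
have lew : forall x y, le x y -> w x <= w y by move=> x y; exact: subset_leq_card.
have lewe : forall x y, le x y -> w y <= w x -> le y x.
  move=> x y hxy hw; have /eqP E : nbhd e x == nbhd e y by rewrite eqEcard; apply/andP; split.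
  by rewrite /le /= E subxx.
have cr : forall x, cmp le x x by move=> x; apply/orP; left; exact: lr.
have hA : forall u v w0, u \in S -> v \in S -> w0 \in S -> [|| cmp le u v, cmp le v w0 | cmp le u w0].
  move=> u v w0 uS vS wS.
  case: (eqVneq u v) => [->|uv]; first by rewrite cr.
  case: (eqVneq v w0) => [->|vw]; first by rewrite cr orbT.
  case: (eqVneq u w0) => [->|uw]; first by rewrite cr !orbT.
  have [x [y [xi [yi [xy sub]]]]] := h3 u v w0 uS vS wS uv vw uw.
  have cxy : cmp le y x by rewrite /cmp /= sub.
  move: xi yi xy cxy; rewrite /cmp !inE.
  by move=> /or3P[]/eqP-> /or3P[]/eqP-> //; rewrite ?eqxx // => _ /orP[]->; rewrite /= ?orbT.
have [c hc] := chain2 lr lt lew lewe (leqnn #|S|) hA.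
pose M := #|T|.+1.
pose d := fun s => (#|T| - w s).+1.
pose q := fun s => d s * M + enum_rank s.
pose a := fun k => \max_(s | (s \in S) && c s && e k s) d s.
pose b := fun k => \max_(s | (s \in S) && ~~ c s && e k s) d s.
pose P := fun s => if c s then Ropp (INR (q s)) else INR (q s).
pose l := fun v => if v \in S then P v else Ropp (INR (a v * M + #|T|)).
pose r := fun v => if v \in S then P v else INR (b v * M + #|T|).
have wT : forall s, w s <= #|T| by move=> s; exact: max_card.
have qle : forall s A, (q s <= A * M + #|T|) = (d s <= A).
  move=> s A; have : (enum_rank s : nat) < #|T| by exact: ltn_ord.
  rewrite /q /M; move: (nat_of_ord _) (d s) => i D hi.
  apply/idP/idP => h.
    rewrite leqNgt; apply/negP => hlt.
    have : A.+1 * #|T|.+1 <= D * #|T|.+1 by rewrite leq_mul2r hlt orbT.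
    rewrite mulSn; lia.
  have : D * #|T|.+1 <= A * #|T|.+1 by rewrite leq_mul2r h orbT.
  lia.
have qpos : forall s, Rlt 0 (INR (q s)).
  move=> s; apply: lt_0_INR; apply/ltP; rewrite /q /d; nia.
have kadj : forall k s, k \notin S -> s \in S -> e k s = (d s <= (if c s then a k else b k)).
  move=> k s kS sS; apply/idP/idP.
    by move=> eks; case cs: (c s); apply: leq_bigmax_cond; rewrite sS cs eks.
  apply: contraLR => neks; rewrite -ltnNge.
  have H : forall s', s' \in S -> c s' = c s -> e k s' -> d s' <= (d s).-1.
    move=> s' s'S cs' eks'.
    have notle : ~~ le s' s.
      apply/negP => h'.
      have : k \in nbhd e s by apply: (subsetP h'); rewrite inE esym.
      by rewrite inE esym => eks; rewrite eks in neks.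
    have := hc _ _ s'S sS cs'; rewrite /cmp => /orP[h|h].
      by rewrite h in notle.
    have : w s < w s'.
      by rewrite ltnNge; apply/negP => hw; rewrite (lewe _ _ h hw) in notle.
    move: (wT s) (wT s'); rewrite /d; lia.
  case cs: (c s).
    have : a k <= (d s).-1.
      by apply/bigmax_leqP => s' /andP[/andP[s'S cs'] eks']; apply: H => //; rewrite cs'.
    rewrite /d; lia.
  have : b k <= (d s).-1.
    by apply/bigmax_leqP => s' /andP[/andP[s'S cs'] eks']; apply: H => //; move: cs'; rewrite cs; case: (c s').
  rewrite /d; lia.
have Pinj : forall u v, P u = P v -> u = v.
  move=> u v; rewrite /P; have := qpos u; have := qpos v.
  have fin : forall u v, INR (q u) = INR (q v) -> u = v.
    move=> u0 v0 /INR_eq E.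
    have := congr1 (modn^~ M) E; rewrite /= /q !modnMDl !modn_small; last first.
    - by apply: (@ltn_trans #|T|) => //; exact: ltn_ord.
    - by apply: (@ltn_trans #|T|) => //; exact: ltn_ord.
    by move/ord_inj/enum_rank_inj.
  case: (c u); case: (c v) => hv hu E; apply: fin; lra.
exists l, r; split.
  move=> v; rewrite /l /r; case: (v \in S); first exact: Rle_refl.
  have := pos_INR (a v * M + #|T|); have := pos_INR (b v * M + #|T|); lra.
have inK : forall v, v \notin S -> v \in K.
  move=> v0 vS; have : v0 \in S :|: K by rewrite hSuK inE.
  by rewrite inE (negbTE vS).
have mixed : forall k s, k \notin S -> s \in S ->
   (e k s <-> exists x, (Rle (l k) x /\ Rle x (r k)) /\ (Rle (l s) x /\ Rle x (r s))).
  move=> k s kS sS; rewrite kadj // /l /r (negbTE kS) sS /P.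
  have Hq := qle s.
  have := pos_INR (a k * M + #|T|); have := pos_INR (b k * M + #|T|); have := qpos s.
  case: (c s) => hqs hb ha; split.
  - move=> h.
    have : Rle (INR (q s)) (INR (a k * M + #|T|)) by apply: le_INR; apply/leP; rewrite Hq.
    move=> hh; exists (Ropp (INR (q s))); split; split; lra.
  - move=> [x [[h1 h2] [h4 h5]]]; rewrite -Hq; apply/leP; apply: INR_le; lra.
  - move=> h.
    have : Rle (INR (q s)) (INR (b k * M + #|T|)) by apply: le_INR; apply/leP; rewrite Hq.
    move=> hh; exists (INR (q s)); split; split; lra.
  - move=> [x [[h1 h2] [h4 h5]]]; rewrite -Hq; apply/leP; apply: INR_le; lra.
move=> u v uv.
case uS: (u \in S); case vS: (v \in S).
- split; first by move=> h; have := hSind u v uS vS; rewrite h.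
  move=> [x [[h1 h2] [h4 h5]]]; exfalso; move/eqP: uv; apply; apply: Pinj.
  by move: h1 h2 h4 h5; rewrite /l /r uS vS; lra.
- rewrite esym; have -> := mixed v u (negbT vS) uS.
  by split; move=> [x [h1 h2]]; exists x; split.
- exact: mixed (negbT uS) vS.
- rewrite (hKcl u v (inK _ (negbT uS)) (inK _ (negbT vS)) uv); split => // _.
  exists R0; rewrite /l /r uS vS.
  have := pos_INR (a u * M + #|T|); have := pos_INR (b u * M + #|T|).
  have := pos_INR (a v * M + #|T|); have := pos_INR (b v * M + #|T|); lra.
Qed.
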